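(* For positive semidefinite operators $A,B$, $$\mathrm{Tr}\,(A+B)\,\mathcal{R}_{A+B}(A)\ge \mathrm{Tr}\,A\,\mathcal{T}_{A+B}(A).$$
   Context: All operators act on a finite-dimensional complex Hilbert space. For positive semidefinite $M$ and self-adjoint $\Delta$ supported in the support of $M$: $\mathcal{T}_M(\Delta)=\int_0^\infty (M+sI)^{-1}\Delta(M+sI)^{-1}\,ds$ (the first derivative $\frac{d}{dt}|_{t=0}\log(M+t\Delta)$), and $\mathcal{R}_M(\Delta)=2\int_0^\infty (M+sI)^{-1}\Delta(M+sI)^{-1}\Delta(M+sI)^{-1}\,ds$ (which equals $-\frac{d^2}{dt^2}|_{t=0}\log(M+t\Delta)$). *)

(* Defs.v *)
From Stdlib Require Import Reals Lra Lia ClassicalEpsilon.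
Open Scope R_scope.

Record C := mkC { re : R ; im : R }.
Definition C0 : C := mkC 0 0.
Definition C1 : C := mkC 1 0.
Definition Cadd (x y : C) : C := mkC (re x + re y) (im x + im y).
Definition Cmul (x y : C) : C :=
  mkC (re x * re y - im x * im y) (re x * im y + im x * re y).
Definition Cconj (x : C) : C := mkC (re x) (- im x).
Definition Cscal (r : R) (x : C) : C := mkC (r * re x) (r * im x).

Fixpoint Csum (n : nat) (f : nat -> C) : C :=
  match n with
  | O => C0
  | S k => Cadd (Csum k f) (f k)
  end.

(* n x n complex matrices: only entries with indices < n are relevant. *)
Definition Mat := nat -> nat -> C.
Definition mid : Mat := fun i j => if Nat.eqb i j then C1 else C0.
Definition madd (A B : Mat) : Mat := fun i j => Cadd (A i j) (B i j).
Definition mscal (r : R) (A : Mat) : Mat := fun i j => Cscal r (A i j).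
Definition mmul (n : nat) (A B : Mat) : Mat :=
  fun i j => Csum n (fun k => Cmul (A i k) (B k j)).
Definition trace (n : nat) (A : Mat) : C := Csum n (fun i => A i i).

Definition qform (n : nat) (A : Mat) (v : nat -> C) : C :=
  Csum n (fun i => Csum n (fun j => Cmul (Cconj (v i)) (Cmul (A i j) (v j)))).

Definition PSD (n : nat) (A : Mat) : Prop :=
  forall v : nat -> C, im (qform n A v) = 0 /\ 0 <= re (qform n A v).

(* Matrix inverse (the two-sided inverse on indices < n, chosen by epsilon;
   junk if the matrix is not invertible). *)
Definition minv (n : nat) (N : Mat) : Mat :=
  epsilon (inhabits mid)
    (fun X => forall i j, (i < n)%nat -> (j < n)%nat ->
       mmul n X N i j = mid i j /\ mmul n N X i j = mid i j).

Definition resolv (n : nat) (M : Mat) (s : R) : Mat :=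
  minv n (madd M (mscal s mid)).

Definition improper_int (f : R -> R) (l : R) : Prop :=
  (forall a b, 0 < a -> a <= b -> inhabited (Riemann_integrable f a b)) /\
  (forall eps, 0 < eps -> exists d, 0 < d /\ exists Bd,
     forall a b (pr : Riemann_integrable f a b),
       0 < a -> a < d -> Bd < b -> a <= b ->
       Rabs (RiemannInt pr - l) < eps).

Definition mx_improper_int (n : nat) (F : R -> Mat) (L : Mat) : Prop :=
  forall i j, (i < n)%nat -> (j < n)%nat ->
    improper_int (fun s => re (F s i j)) (re (L i j)) /\
    improper_int (fun s => im (F s i j)) (im (L i j)).

Definition is_opT (n : nat) (M D T : Mat) : Prop :=
  mx_improper_int n
    (fun s => mmul n (mmul n (resolv n M s) D) (resolv n M s)) T.

Definition is_opR (n : nat) (M D Rm : Mat) : Prop :=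
  mx_improper_int n
    (fun s => mscal 2 (mmul n (mmul n (mmul n (mmul n (resolv n M s) D)
                                   (resolv n M s)) D) (resolv n M s))) Rm.

(* Main.v *)
From Stdlib Require Import Reals Lra Lia ClassicalEpsilon FunctionalExtensionality Classical.
From HB Require Import structures.
Set Warnings "-notation-overridden,-ambiguous-paths,-deprecated,-redundant-canonical-projection".
From mathcomp Require Import all_boot all_order all_algebra.
Require Import Defs.
Delimit Scope ring_scope with ring.
Delimit Scope R_scope with R.
Open Scope R_scope.
Set Implicit Arguments. Unset Strict Implicit.
Import GRing.Theory.

Lemma C_ext (x y : C) : re x = re y -> im x = im y -> x = y.
Proof. destruct x, y; simpl; intros -> ->; reflexivity. Qed.

Definition Ceqb (x y : C) : bool :=
  if Req_EM_T (re x) (re y) then (if Req_EM_T (im x) (im y) then true else false) else false.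
Lemma Ceqb_axiom : Equality.axiom Ceqb.
Proof.
  intros x y; unfold Ceqb.
  destruct (Req_EM_T (re x) (re y)); destruct (Req_EM_T (im x) (im y));
  constructor; try (apply C_ext; assumption); intro H; subst; auto.
Qed.
HB.instance Definition _ := hasDecEq.Build C Ceqb_axiom.

Definition Cfind (P : pred C) (n : nat) : option C :=
  match excluded_middle_informative (exists x, P x) with
  | left H => Some (proj1_sig (constructive_indefinite_description _ H))
  | right _ => None end.
Lemma Cfind_correct P n x : Cfind P n = Some x -> P x.
Proof. unfold Cfind. destruct excluded_middle_informative as [H|H]; [|discriminate].
  intro E; injection E; intros <-. exact (proj2_sig (constructive_indefinite_description _ H)). Qed.
Lemma Cfind_complete (P : pred C) : (exists x, P x) -> exists n, Cfind P n.
Proof. intro H; exists 0%nat; unfold Cfind; destruct excluded_middle_informative; easy. Qed.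
Lemma Cfind_ext (P Q : pred C) : P =1 Q -> Cfind P =1 Cfind Q.
Proof. intros H n. assert (P = Q) by (apply functional_extensionality; exact H). subst; reflexivity. Qed.
HB.instance Definition _ := hasChoice.Build C Cfind_correct Cfind_complete Cfind_ext.

Definition Copp (x : C) : C := mkC (- re x) (- im x).
Lemma CaddA : associative Cadd. Proof. intros x y z; apply C_ext; simpl; ring. Qed.
Lemma CaddC : commutative Cadd. Proof. intros x y; apply C_ext; simpl; ring. Qed.
Lemma Cadd0 : left_id C0 Cadd. Proof. intros x; apply C_ext; simpl; ring. Qed.
Lemma CaddN : left_inverse C0 Copp Cadd. Proof. intros x; apply C_ext; simpl; ring. Qed.
HB.instance Definition _ := GRing.isZmodule.Build C CaddA CaddC Cadd0 CaddN.
Lemma CmulA : associative Cmul. Proof. intros x y z; apply C_ext; simpl; ring. Qed.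
Lemma CmulC : commutative Cmul. Proof. intros x y; apply C_ext; simpl; ring. Qed.
Lemma Cmul1 : left_id C1 Cmul. Proof. intros x; apply C_ext; simpl; ring. Qed.
Lemma CmulD : left_distributive Cmul Cadd. Proof. intros x y z; apply C_ext; simpl; ring. Qed.
Lemma C1_neq0 : C1 != C0.
Proof. apply/eqP; intro H; injection H; lra. Qed.
HB.instance Definition _ := GRing.Zmodule_isComNzRing.Build C CmulA CmulC Cmul1 CmulD C1_neq0.
Definition Cinv (x : C) : C :=
  let d := (re x * re x + im x * im x)%R in mkC (re x / d) (- im x / d).
Lemma Cinv_l (x : C) : x != 0%ring -> Cmul (Cinv x) x = C1.
Proof.
  move=> /eqP Hx. have Hd : (re x * re x + im x * im x <> 0)%R.
  { intro H. apply Hx. apply C_ext; simpl; nra. }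
  apply C_ext; simpl; field; auto.
Qed.
Lemma Cinv0 : Cinv 0%ring = 0%ring.
Proof. apply C_ext; simpl; unfold Rdiv; ring. Qed.
HB.instance Definition _ := GRing.ComNzRing_isField.Build C Cinv_l Cinv0.
Lemma imp_int_of f l a b : improper_int f l -> 0 < a -> a <= b -> inhabited (Riemann_integrable f a b).
Proof. intros [H _] Ha Hab; exact (H a b Ha Hab). Qed.

Lemma imp_comb (f g u : R -> R) (l m c : R) :
  improper_int f l -> improper_int g m ->
  (forall x, 0 < x -> u x = f x + c * g x) -> improper_int u (l + c * m).
Proof.
  intros [Hf1 Hf2] [Hg1 Hg2] Hu. split.
  - intros a b Ha Hab. destruct (Hf1 a b Ha Hab) as [pf]. destruct (Hg1 a b Ha Hab) as [pg].
    constructor. apply Riemann_integrable_ext with (f := fun x => f x + c * g x).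
    + intros x Hx. rewrite Rmin_left in Hx; try lra. rewrite Hu; lra.
    + apply RiemannInt_P10; assumption.
  - intros eps Heps.
    set e1 := eps / 2. set e2 := eps / (2 * (Rabs c + 1)).
    assert (He1 : 0 < e1) by (unfold e1; lra).
    assert (Hc : 0 < Rabs c + 1) by (pose proof (Rabs_pos c); lra).
    assert (He2 : 0 < e2) by (unfold e2; apply Rdiv_lt_0_compat; lra).
    destruct (Hf2 e1 He1) as [d1 [Hd1 [B1 HB1]]].
    destruct (Hg2 e2 He2) as [d2 [Hd2 [B2 HB2]]].
    exists (Rmin d1 d2). split; [apply Rmin_pos; assumption|].
    exists (Rmax B1 B2). intros a b pr Ha Had Hb Hab.
    destruct (Hf1 a b Ha Hab) as [pf]. destruct (Hg1 a b Ha Hab) as [pg].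
    pose proof (RiemannInt_P10 c pf pg) as pfg.
    assert (E1 : RiemannInt pr = RiemannInt pfg).
    { apply RiemannInt_P18; [assumption|]. intros x Hx. rewrite Hu; lra. }
    rewrite E1 (RiemannInt_P13 pf pg pfg).
    assert (X1 := HB1 a b pf Ha (Rlt_le_trans _ _ _ Had (Rmin_l _ _)) (Rle_lt_trans _ _ _ (Rmax_l _ _) Hb) Hab).
    assert (X2 := HB2 a b pg Ha (Rlt_le_trans _ _ _ Had (Rmin_r _ _)) (Rle_lt_trans _ _ _ (Rmax_r _ _) Hb) Hab).
    replace (RiemannInt pf + c * RiemannInt pg - (l + c * m)) with
      ((RiemannInt pf - l) + c * (RiemannInt pg - m)) by ring.
    eapply Rle_lt_trans; [apply Rabs_triang|]. rewrite Rabs_mult.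
    assert (Rabs c * Rabs (RiemannInt pg - m) <= (Rabs c + 1) * e2).
    { apply Rmult_le_compat; try apply Rabs_pos; lra. }
    assert ((Rabs c + 1) * e2 = eps / 2) by (unfold e2; field; lra).
    unfold e1 in X1. lra.
Qed.

Lemma imp_ext (f u : R -> R) l : improper_int f l -> (forall x, 0 < x -> u x = f x) -> improper_int u l.
Proof.
  intros H Hu. replace l with (l + 0 * l) by ring. apply imp_comb with f f; auto.
  intros x Hx; rewrite Hu; auto; ring.
Qed.

Lemma imp_unique f l m : improper_int f l -> improper_int f m -> l = m.
Proof.
  intros [H1 H2] [_ H3]. apply Rminus_diag_uniq. destruct (Req_dec (l - m) 0) as [?|Hne]; [assumption|exfalso].
  pose proof (Rabs_pos_lt _ Hne) as Hp.
  set e := Rabs (l - m) / 2. assert (He : 0 < e) by (unfold e; lra).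
  destruct (H2 e He) as [d1 [Hd1 [B1 HB1]]]. destruct (H3 e He) as [d2 [Hd2 [B2 HB2]]].
  set a := Rmin d1 d2 / 2. set b := Rmax (Rmax B1 B2) a + 1.
  assert (Ha : 0 < a) by (unfold a; pose proof (Rmin_pos _ _ Hd1 Hd2); lra).
  assert (Hab : a <= b) by (unfold b; pose proof (Rmax_r (Rmax B1 B2) a); lra).
  destruct (H1 a b Ha Hab) as [pr].
  assert (a < d1) by (unfold a; pose proof (Rmin_l d1 d2); pose proof (Rmin_pos _ _ Hd1 Hd2); lra).
  assert (a < d2) by (unfold a; pose proof (Rmin_r d1 d2); pose proof (Rmin_pos _ _ Hd1 Hd2); lra).
  assert (B1 < b) by (unfold b; pose proof (Rmax_l (Rmax B1 B2) a); pose proof (Rmax_l B1 B2); lra).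
  assert (B2 < b) by (unfold b; pose proof (Rmax_l (Rmax B1 B2) a); pose proof (Rmax_r B1 B2); lra).
  pose proof (HB1 a b pr Ha ltac:(assumption) ltac:(assumption) Hab) as Y1.
  pose proof (HB2 a b pr Ha ltac:(assumption) ltac:(assumption) Hab) as Y2.
  pose proof (Rabs_triang (RiemannInt pr - m) (l - RiemannInt pr)) as Y3.
  replace (RiemannInt pr - m + (l - RiemannInt pr)) with (l - m) in Y3 by ring.
  rewrite -Rabs_Ropp in Y1. replace (- (RiemannInt pr - l)) with (l - RiemannInt pr) in Y1 by ring.
  unfold e in *. lra.
Qed.

Lemma imp_zero f l : improper_int f l -> (forall x, 0 < x -> f x = 0) -> l = 0.
Proof.
  intros H Hf. assert (H0 : improper_int f 0).
  { replace 0 with (0 + 0 * 0) by ring.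
    apply imp_comb with (fun _ => 0) (fun _ => 0).
    - split. + intros; constructor. apply (RiemannInt_P14 a b 0).
      + intros eps Heps. exists 1. split; [lra|]. exists 0. intros a b pr Ha Had Hb Hab.
        rewrite (RiemannInt_P15 pr). rewrite Rmult_0_l Rminus_0_r Rabs_R0; lra.
    - split. + intros; constructor. apply (RiemannInt_P14 a b 0).
      + intros eps Heps. exists 1. split; [lra|]. exists 0. intros a b pr Ha Had Hb Hab.
        rewrite (RiemannInt_P15 pr). rewrite Rmult_0_l Rminus_0_r Rabs_R0; lra.
    - intros x Hx; rewrite Hf; auto; ring. }
  exact (imp_unique H H0).
Qed.
Lemma imp0 : improper_int (fun _ => 0) 0.
Proof.
  split. + intros; constructor. apply (RiemannInt_P14 a b 0).
  + intros eps Heps. exists 1. split; [lra|]. exists 0. intros a b pr Ha Had Hb Hab.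
    rewrite (RiemannInt_P15 pr). rewrite Rmult_0_l Rminus_0_r Rabs_R0; lra.
Qed.

Lemma imp_scal g m c : improper_int g m -> improper_int (fun s => c * g s) (c * m).
Proof.
  intro H. replace (c * m) with (0 + c * m) by ring. apply imp_comb with (fun _ => 0) g; auto.
  apply imp0. intros; ring.
Qed.

Definition Cimp (h : R -> C) (c : C) : Prop :=
  improper_int (fun s => re (h s)) (re c) /\ improper_int (fun s => im (h s)) (im c).

Lemma Cimp_add h1 h2 c1 c2 : Cimp h1 c1 -> Cimp h2 c2 ->
  Cimp (fun s => Cadd (h1 s) (h2 s)) (Cadd c1 c2).
Proof.
  intros [H1 H2] [H3 H4]; split; simpl.
  - replace (re c1 + re c2) with (re c1 + 1 * re c2) by ring.
    apply imp_comb with (fun s => re (h1 s)) (fun s => re (h2 s)); auto. intros; ring.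
  - replace (im c1 + im c2) with (im c1 + 1 * im c2) by ring.
    apply imp_comb with (fun s => im (h1 s)) (fun s => im (h2 s)); auto. intros; ring.
Qed.

Lemma Cimp_mulc a h c : Cimp h c -> Cimp (fun s => Cmul a (h s)) (Cmul a c).
Proof.
  intros [H1 H2]; split; simpl.
  - replace (re a * re c - im a * im c) with (re a * re c + (- im a) * im c) by ring.
    apply imp_comb with (fun s => re a * re (h s)) (fun s => im (h s)); auto.
    apply imp_scal; auto. all: try (intros; ring).
  - apply imp_comb with (fun s => re a * im (h s)) (fun s => re (h s)); auto.
    apply imp_scal; auto. all: try (intros; ring).
Qed.

Lemma Cimp0 : Cimp (fun _ => C0) C0.
Proof. split; simpl; apply imp0. Qed.

Lemma Cimp_Csum m (h : R -> nat -> C) (c : nat -> C) :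
  (forall k, lt k m -> Cimp (fun s => h s k) (c k)) ->
  Cimp (fun s => Csum m (h s)) (Csum m c).
Proof.
  induction m as [|m IH]; intro H; simpl.
  - apply Cimp0.
  - apply Cimp_add.
    + apply IH. intros k Hk; apply H; lia.
    + apply H; lia.
Qed.

Lemma imp_trace n F L X : mx_improper_int n F L ->
  Cimp (fun s => trace n (mmul n X (F s))) (trace n (mmul n X L)).
Proof.
  intro H. unfold trace, mmul.
  apply Cimp_Csum. intros i Hi.
  apply Cimp_Csum. intros k Hk.
  apply Cimp_mulc. destruct (H k i Hk Hi) as [H1 H2]. split; assumption.
Qed.
Lemma FTC_local (h G : R -> R) a b : a <= b ->
  (forall x, a <= x <= b -> continuity_pt h x) ->
  (forall x, a <= x <= b -> derivable_pt_lim G x (h x)) ->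
  forall pr : Riemann_integrable h a b, RiemannInt pr = G b - G a.
Proof.
  intros hab C0 HD pr.
  rewrite (RiemannInt_P20 hab (FTC_P1 hab C0) pr).
  pose proof (RiemannInt_P29 hab C0) as AP.
  assert (AG : antiderivative h G a b).
  { split; [|assumption]. intros x Hx.
    exists (exist _ (h x) (HD x Hx)). symmetry. apply derive_pt_eq_0. apply HD; auto. }
  destruct (antiderivative_Ucte _ _ _ _ _ AP AG) as [c Hc].
  rewrite (Hc b) ?(Hc a); try lra; ring.
Qed.

Lemma bound_helper (phi : R -> R) x eps (pr : Riemann_integrable phi x (2*x)) :
  0 < x -> 0 < eps ->
  (forall s, x < s < 2*x -> Rabs (s * phi s - x * phi x) < 2*eps) ->
  Rabs (RiemannInt pr) < 2*eps -> Rabs (x * phi x) < 6*eps.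
Proof.
  intros Hx He Hs HI.
  assert (Hx2 : x <= 2*x) by lra.
  apply Rabs_def1.
  - destruct (Rle_or_lt (x * phi x - 2*eps) 0) as [Hle|Hgt]; [lra|].
    set c0 := (x * phi x - 2*eps) / (2*x).
    assert (Hc0 : 0 < c0) by (unfold c0; apply Rdiv_lt_0_compat; lra).
    pose proof (RiemannInt_P14 x (2*x) c0) as prc.
    assert (Hle : RiemannInt prc <= RiemannInt pr).
    { apply RiemannInt_P19; auto. intros s Hs'. unfold fct_cte.
      pose proof (Hs s Hs') as Hb. apply Rabs_def2 in Hb. destruct Hb as [Hb1 Hb2].
      assert (s * phi s > s * c0).
      { assert (E : x * phi x - 2*eps = 2*x*c0) by (unfold c0; field; lra).
        assert (s * c0 < 2*x*c0) by (apply Rmult_lt_compat_r; lra). lra. }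
      apply Rlt_le. apply Rmult_lt_reg_l with s; lra. }
    rewrite (RiemannInt_P15 prc) in Hle. apply Rabs_def2 in HI.
    assert (c0 * (2 * x - x) = (x * phi x - 2*eps) / 2) by (unfold c0; field; lra). lra.
  - destruct (Rle_or_lt 0 (x * phi x + 2*eps)) as [Hle|Hgt]; [lra|].
    set c0 := (x * phi x + 2*eps) / (2*x).
    assert (Hc0 : c0 < 0) by (unfold c0; apply Rdiv_neg_pos; lra).
    pose proof (RiemannInt_P14 x (2*x) c0) as prc.
    assert (Hle : RiemannInt pr <= RiemannInt prc).
    { apply RiemannInt_P19; auto. intros s Hs'. unfold fct_cte.
      pose proof (Hs s Hs') as Hb. apply Rabs_def2 in Hb. destruct Hb as [Hb1 Hb2].
      assert (s * phi s < s * c0).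
      { assert (E : x * phi x + 2*eps = 2*x*c0) by (unfold c0; field; lra).
        assert (c0 * (2*x) < c0 * s) by (apply Rmult_lt_gt_compat_neg_l; lra). nra. }
      apply Rlt_le. apply Rmult_lt_reg_l with s; lra. }
    rewrite (RiemannInt_P15 prc) in Hle. apply Rabs_def2 in HI.
    assert (c0 * (2 * x - x) = (x * phi x + 2*eps) / 2) by (unfold c0; field; lra). lra.
Qed.

Lemma main_an (phi p : R -> R) l1 l2 :
  improper_int phi l1 -> improper_int p l2 ->
  (forall a b, 0 < a -> a <= b ->
     forall pr : Riemann_integrable (fun x => p x + -1 * phi x) a b,
       RiemannInt pr = b * phi b - a * phi a) -> l2 = l1.
Proof.
  intros Hphi Hp HF.
  assert (Hu : improper_int (fun x => p x + -1 * phi x) (l2 + -1 * l1))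
    by (apply imp_comb with p phi; auto).
  set L := l2 - l1.
  assert (Key : forall eps, 0 < eps -> Rabs L < 13 * eps).
  { intros eps He.
    destruct Hu as [Hu1 Hu2]. destruct Hphi as [Hf1 Hf2].
    destruct (Hu2 eps He) as [d0 [Hd0 [B0 HB0]]].
    destruct (Hf2 eps He) as [d1 [Hd1 [B1 HB1]]].
    set d := Rmin (Rmin d0 d1) 1. set B := Rmax (Rmax B0 B1) 1.
    assert (Hd : 0 < d) by (apply Rmin_pos; [apply Rmin_pos|]; lra).
    assert (Hdd0 : d <= d0) by (unfold d; eapply Rle_trans; [apply Rmin_l|apply Rmin_l]).
    assert (Hdd1 : d <= d1) by (unfold d; eapply Rle_trans; [apply Rmin_l|apply Rmin_r]).
    assert (Hdd2 : d <= 1) by (unfold d; apply Rmin_r).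
    assert (HB0' : B0 <= B) by (unfold B; eapply Rle_trans; [apply Rmax_l|apply Rmax_l]).
    assert (HB1' : B1 <= B) by (unfold B; eapply Rle_trans; [apply Rmax_r|apply Rmax_l]).
    assert (HB1'' : 1 <= B) by (unfold B; apply Rmax_r).
    set a := d / 4. set b := B + 1.
    assert (Ha : 0 < a) by (unfold a; lra).
    assert (GD : forall a' b', 0 < a' -> a' < d -> B < b' ->
               Rabs (b' * phi b' - a' * phi a' - L) < eps).
    { intros a' b' Ha' Had' Hb'.
      assert (Hab' : a' <= b') by lra.
      destruct (Hu1 a' b' Ha' Hab') as [pr].
      rewrite -(HF a' b' Ha' Hab' pr). unfold L.
      replace (l2 - l1) with (l2 + -1 * l1) by ring. apply HB0; lra. }
    assert (IE : forall x y (pr : Riemann_integrable phi x y), 0 < x -> x < d -> B < y -> x <= y ->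
                   Rabs (RiemannInt pr - l1) < eps).
    { intros x y pr Hx Hxd Hy Hxy. apply HB1; lra. }
    assert (Gb : Rabs (b * phi b) < 6 * eps).
    { assert (Hb2 : b <= 2*b) by (unfold b; lra).
      destruct (Hf1 b (2*b) ltac:(unfold b; lra) Hb2) as [prb].
      apply (@bound_helper phi b eps prb); [unfold b; lra|assumption| |].
      - intros s Hs. pose proof (GD a s Ha ltac:(unfold a; lra) ltac:(unfold b in Hs; lra)) as X1.
        pose proof (GD a b Ha ltac:(unfold a; lra) ltac:(unfold b; lra)) as X2.
        apply Rabs_def2 in X1; apply Rabs_def2 in X2. apply Rabs_def1; lra.
      - destruct (Hf1 a b Ha ltac:(unfold a, b; lra)) as [pab].
        destruct (Hf1 a (2*b) Ha ltac:(unfold a, b; lra)) as [pa2b].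
        pose proof (RiemannInt_P26 pab prb pa2b) as Ch.
        pose proof (IE a b pab Ha ltac:(unfold a; lra) ltac:(unfold b; lra) ltac:(unfold a, b; lra)) as X1.
        pose proof (IE a (2*b) pa2b Ha ltac:(unfold a; lra) ltac:(unfold b; lra) ltac:(unfold a, b; lra)) as X2.
        apply Rabs_def2 in X1; apply Rabs_def2 in X2. apply Rabs_def1; lra. }
    assert (Ga : Rabs (a * phi a) < 6 * eps).
    { assert (Ha2 : a <= 2*a) by lra.
      destruct (Hf1 a (2*a) Ha Ha2) as [pra].
      apply (@bound_helper phi a eps pra); [assumption|assumption| |].
      - intros s Hs. pose proof (GD s b ltac:(lra) ltac:(unfold a in Hs; lra) ltac:(unfold b; lra)) as X1.
        pose proof (GD a b Ha ltac:(unfold a; lra) ltac:(unfold b; lra)) as X2.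
        apply Rabs_def2 in X1; apply Rabs_def2 in X2. apply Rabs_def1; lra.
      - destruct (Hf1 a b Ha ltac:(unfold a, b; lra)) as [pab].
        destruct (Hf1 (2*a) b ltac:(lra) ltac:(unfold a, b; lra)) as [p2ab].
        pose proof (RiemannInt_P26 pra p2ab pab) as Ch.
        pose proof (IE a b pab Ha ltac:(unfold a; lra) ltac:(unfold b; lra) ltac:(unfold a, b; lra)) as X1.
        pose proof (IE (2*a) b p2ab ltac:(lra) ltac:(unfold a; lra) ltac:(unfold b; lra) ltac:(unfold a, b; lra)) as X2.
        apply Rabs_def2 in X1; apply Rabs_def2 in X2. apply Rabs_def1; lra. }
    pose proof (GD a b Ha ltac:(unfold a; lra) ltac:(unfold b; lra)) as X.
    apply Rabs_def2 in X; apply Rabs_def2 in Ga; apply Rabs_def2 in Gb.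
    apply Rabs_def1; lra. }
  apply Rminus_diag_uniq. fold L.
  destruct (Req_dec L 0) as [?|Hne]; [assumption|exfalso].
  pose proof (Rabs_pos_lt _ Hne) as HpL.
  pose proof (Key (Rabs L / 13) ltac:(lra)). lra.
Qed.
Lemma dpl_eq f x l l' : derivable_pt_lim f x l -> l = l' -> derivable_pt_lim f x l'.
Proof. intros H <-; exact H. Qed.

Definition CD (F : R -> C) (d : C) (s : R) : Prop :=
  derivable_pt_lim (fun t => re (F t)) s (re d) /\ derivable_pt_lim (fun t => im (F t)) s (im d).

Lemma CD_const c s : CD (fun _ => c) C0 s.
Proof. split; simpl; apply (derivable_pt_lim_const _ s). Qed.

Lemma CD_add F G d1 d2 s : CD F d1 s -> CD G d2 s ->
  CD (fun t => Cadd (F t) (G t)) (Cadd d1 d2) s.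
Proof.
  intros [H1 H2] [H3 H4]; split; simpl.
  - exact (derivable_pt_lim_plus _ _ _ _ _ H1 H3).
  - exact (derivable_pt_lim_plus _ _ _ _ _ H2 H4).
Qed.

Lemma CD_mul F G d1 d2 s : CD F d1 s -> CD G d2 s ->
  CD (fun t => Cmul (F t) (G t)) (Cadd (Cmul d1 (G s)) (Cmul (F s) d2)) s.
Proof.
  intros [H1 H2] [H3 H4]; split; simpl.
  - pose proof (derivable_pt_lim_minus _ _ _ _ _ (derivable_pt_lim_mult _ _ _ _ _ H1 H3)
                  (derivable_pt_lim_mult _ _ _ _ _ H2 H4)) as X.
    unfold minus_fct, mult_fct in X. eapply dpl_eq; [exact X|]. ring.
  - pose proof (derivable_pt_lim_plus _ _ _ _ _ (derivable_pt_lim_mult _ _ _ _ _ H1 H4)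
                  (derivable_pt_lim_mult _ _ _ _ _ H2 H3)) as X.
    unfold plus_fct, mult_fct in X. eapply dpl_eq; [exact X|]. ring.
Qed.

Lemma CD_scal r F d s : CD F d s -> CD (fun t => Cscal r (F t)) (Cscal r d) s.
Proof.
  intros [H1 H2]; split; simpl.
  - exact (derivable_pt_lim_scal _ _ _ _ H1).
  - exact (derivable_pt_lim_scal _ _ _ _ H2).
Qed.

Lemma CD_Csum m (F : R -> nat -> C) (D : nat -> C) s :
  (forall k, lt k m -> CD (fun t => F t k) (D k) s) ->
  CD (fun t => Csum m (F t)) (Csum m D) s.
Proof.
  induction m as [|m IH]; intro H; simpl.
  - apply CD_const.
  - apply CD_add; [apply IH; intros; apply H; lia | apply H; lia].
Qed.

Definition MD (n : nat) (F : R -> Mat) (D : Mat) (s : R) : Prop :=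
  forall i j, lt i n -> lt j n -> CD (fun t => F t i j) (D i j) s.

Lemma MD_const n X s : MD n (fun _ => X) (fun _ _ => C0) s.
Proof. intros i j _ _; apply CD_const. Qed.

Lemma Csum_add n (X Y : nat -> C) :
  Cadd (Csum n X) (Csum n Y) = Csum n (fun k => Cadd (X k) (Y k)).
Proof.
  induction n as [|m IH]; simpl.
  - apply C_ext; simpl; ring.
  - rewrite -IH. apply C_ext; simpl; ring.
Qed.

Lemma MD_mul n F G D1 D2 s : MD n F D1 s -> MD n G D2 s ->
  MD n (fun t => mmul n (F t) (G t)) (madd (mmul n D1 (G s)) (mmul n (F s) D2)) s.
Proof.
  intros H1 H2 i j Hi Hj. unfold mmul, madd.
  rewrite Csum_add. apply CD_Csum. intros k Hk. apply CD_mul; auto.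
Qed.

Lemma MD_scal n r F D s : MD n F D s -> MD n (fun t => mscal r (F t)) (mscal r D) s.
Proof. intros H i j Hi Hj; unfold mscal; apply CD_scal; auto. Qed.

Lemma CD_trace n F D s : MD n F D s -> CD (fun t => trace n (F t)) (trace n D) s.
Proof. intros H; unfold trace; apply CD_Csum; intros; apply H; auto. Qed.

Lemma CD_cont F d s : CD F d s ->
  continuity_pt (fun t => re (F t)) s /\ continuity_pt (fun t => im (F t)) s.
Proof.
  intros [H1 H2]; split; apply derivable_continuous_pt; eexists; eassumption.
Qed.
Definition EB (n : nat) (X : Mat) (al : R) : Prop :=
  forall i j, lt i n -> lt j n -> Rabs (re (X i j)) <= al /\ Rabs (im (X i j)) <= al.

Lemma EB_mono n X a b : EB n X a -> a <= b -> EB n X b.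
Proof. intros H Hab i j Hi Hj; destruct (H i j Hi Hj); split; lra. Qed.

Lemma abs3 x y z : Rabs (x + (y + z)) <= Rabs x + Rabs y + Rabs z.
Proof.
  eapply Rle_trans; [apply Rabs_triang|].
  pose proof (Rabs_triang y z). lra.
Qed.

Lemma Csum_prod_bound (a b : nat -> C) al be m :
  0 <= al -> 0 <= be ->
  (forall k, lt k m -> Rabs (re (a k)) <= al /\ Rabs (im (a k)) <= al) ->
  (forall k, lt k m -> Rabs (re (b k)) <= be /\ Rabs (im (b k)) <= be) ->
  Rabs (re (Csum m (fun k => Cmul (a k) (b k)))) <= 2 * INR m * al * be /\
  Rabs (im (Csum m (fun k => Cmul (a k) (b k)))) <= 2 * INR m * al * be.
Proof.
  intros Ha Hb. induction m as [|m IH]; intros HA HB; cbn [Csum re im Cadd Cmul C0].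
  - rewrite Rabs_R0; simpl INR; split; lra.
  - destruct IH as [I1 I2]; [intros; apply HA; lia | intros; apply HB; lia|].
    destruct (HA m ltac:(lia)) as [A1 A2]. destruct (HB m ltac:(lia)) as [B1 B2].
    rewrite S_INR.
    assert (P1 : Rabs (re (a m) * re (b m)) <= al * be) by (rewrite Rabs_mult; apply Rmult_le_compat; auto using Rabs_pos).
    assert (P2 : Rabs (im (a m) * im (b m)) <= al * be) by (rewrite Rabs_mult; apply Rmult_le_compat; auto using Rabs_pos).
    assert (P3 : Rabs (re (a m) * im (b m)) <= al * be) by (rewrite Rabs_mult; apply Rmult_le_compat; auto using Rabs_pos).
    assert (P4 : Rabs (im (a m) * re (b m)) <= al * be) by (rewrite Rabs_mult; apply Rmult_le_compat; auto using Rabs_pos).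
    split.
    + pose proof (abs3 (re (Csum m (fun k => Cmul (a k) (b k)))) (re (a m) * re (b m)) (- (im (a m) * im (b m)))) as Z.
      rewrite Rabs_Ropp in Z. unfold Rminus. lra.
    + pose proof (abs3 (im (Csum m (fun k => Cmul (a k) (b k)))) (re (a m) * im (b m)) (im (a m) * re (b m))) as Z.
      lra.
Qed.

Lemma EB_mul n X Y al be : 0 <= al -> 0 <= be -> EB n X al -> EB n Y be ->
  EB n (mmul n X Y) (2 * INR n * al * be).
Proof.
  intros Ha Hb HX HY i j Hi Hj. unfold mmul.
  apply (@Csum_prod_bound (fun k => X i k) (fun k => Y k j) al be n); auto.
Qed.

Lemma R_deriv (Rf : R -> Mat) n s : 0 < s ->
  (forall t, 0 < t -> EB n (Rf t) (/ t)) ->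
  (forall t, 0 < t -> forall i j, lt i n -> lt j n ->
      Rf t i j = Cadd (Rf s i j) (Cscal (s - t) (mmul n (Rf t) (Rf s) i j))) ->
  (forall t, 0 < t -> forall i j, lt i n -> lt j n ->
      mmul n (Rf t) (Rf s) i j = Cadd (mmul n (Rf s) (Rf s) i j)
         (Cscal (s - t) (mmul n (mmul n (Rf t) (Rf s)) (Rf s) i j))) ->
  MD n Rf (mscal (-1) (mmul n (Rf s) (Rf s))) s.
Proof.
  intros Hs HB HD HQ i j Hi Hj.
  set K := 2 * INR n * (2 * INR n * (2 / s) * / s) * / s.
  assert (HK : 0 <= K).
  { unfold K. pose proof (pos_INR n). assert (0 < / s) by (apply Rinv_0_lt_compat; lra).
    assert (0 < 2 / s) by (apply Rdiv_lt_0_compat; lra).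
    repeat apply Rmult_le_pos; lra. }
  assert (TB : forall t, s / 2 < t -> EB n (mmul n (mmul n (Rf t) (Rf s)) (Rf s)) K).
  { intros t Ht. assert (Htp : 0 < t) by lra.
    assert (Hi1 : / t <= 2 / s).
    { unfold Rdiv. rewrite -(Rinv_inv 2) -Rinv_mult. apply Rinv_le_contravar; lra. }
    assert (0 < / s) by (apply Rinv_0_lt_compat; lra).
    apply EB_mul; [| |apply EB_mul| apply HB; lra].
    - pose proof (pos_INR n). assert (0 < 2 / s) by (apply Rdiv_lt_0_compat; lra).
      repeat apply Rmult_le_pos; lra.
    - lra.
    - assert (0 < 2 / s) by (apply Rdiv_lt_0_compat; lra). lra.
    - lra.
    - eapply EB_mono; [apply HB; lra|exact Hi1].
    - apply HB; lra. }
  assert (Gen : forall (g : C -> R), (forall x y, g (Cadd x y) = g x + g y) ->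
                 (forall r x, g (Cscal r x) = r * g x) ->
                 (forall t, s/2 < t -> Rabs (g (mmul n (mmul n (Rf t) (Rf s)) (Rf s) i j)) <= K) ->
                 derivable_pt_lim (fun t => g (Rf t i j)) s (g (mscal (-1) (mmul n (Rf s) (Rf s)) i j))).
  { intros g gadd gscal gB eps He.
    assert (Hd : 0 < Rmin (s/2) (eps / (K + 1))).
    { apply Rmin_pos; [lra|apply Rdiv_lt_0_compat; lra]. }
    exists (mkposreal _ Hd). intros h Hh0 Hh. simpl in Hh.
    assert (Hh1 : Rabs h < s / 2) by (eapply Rlt_le_trans; [exact Hh|apply Rmin_l]).
    assert (Hh2 : Rabs h < eps / (K + 1)) by (eapply Rlt_le_trans; [exact Hh|apply Rmin_r]).
    assert (Ht : s / 2 < s + h) by (apply Rabs_def2 in Hh1; lra).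
    rewrite (HD (s + h) ltac:(lra) i j Hi Hj) ?gadd ?gscal.
    rewrite (HQ (s + h) ltac:(lra) i j Hi Hj) ?gadd ?gscal.
    unfold mscal; rewrite ?gscal.
    replace ((g (Rf s i j) + (s - (s + h)) * (g (mmul n (Rf s) (Rf s) i j) +
        (s - (s + h)) * g (mmul n (mmul n (Rf (s + h)) (Rf s)) (Rf s) i j)) - g (Rf s i j)) / h
        - -1 * g (mmul n (Rf s) (Rf s) i j))
      with (h * g (mmul n (mmul n (Rf (s + h)) (Rf s)) (Rf s) i j)) by (field; auto).
    rewrite Rabs_mult.
    pose proof (gB (s + h) Ht) as X.
    apply Rle_lt_trans with (Rabs h * (K + 1)).
    - apply Rmult_le_compat_l; [apply Rabs_pos|lra].
    - apply (Rmult_lt_compat_r (K + 1)) in Hh2; [|lra].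
      replace (eps / (K + 1) * (K + 1)) with eps in Hh2 by (field; lra). exact Hh2. }
  split.
  - apply Gen; [reflexivity|reflexivity|]. intros t Ht; apply (TB t Ht); auto.
  - apply Gen; [reflexivity|reflexivity|]. intros t Ht; apply (TB t Ht); auto.
Qed.
Open Scope ring_scope.

Lemma re_add (x y : C) : re (x + y) = (re x + re y)%R. Proof. reflexivity. Qed.
Lemma im_add (x y : C) : im (x + y) = (im x + im y)%R. Proof. reflexivity. Qed.
Lemma re_mul (x y : C) : re (x * y) = (re x * re y - im x * im y)%R. Proof. reflexivity. Qed.
Lemma im_mul (x y : C) : im (x * y) = (re x * im y + im x * re y)%R. Proof. reflexivity. Qed.
Lemma re_0 : re 0 = 0%R. Proof. reflexivity. Qed.
Lemma im_0 : im 0 = 0%R. Proof. reflexivity. Qed.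
Lemma re_1 : re 1 = 1%R. Proof. reflexivity. Qed.
Lemma im_1 : im 1 = 0%R. Proof. reflexivity. Qed.
Lemma re_opp (x : C) : re (- x) = (- re x)%R. Proof. reflexivity. Qed.
Lemma im_opp (x : C) : im (- x) = (- im x)%R. Proof. reflexivity. Qed.

Definition toM n (X : Mat) : 'M[C]_n := \matrix_(i < n, j < n) X i j.

Lemma Csum_big n f : Csum n f = \sum_(k < n) f k.
Proof.
  elim: n => [|n IH]; first by rewrite big_ord0.
  by rewrite big_ord_recr /= IH.
Qed.

Lemma toM_mul n X Y : toM n (mmul n X Y) = toM n X *m toM n Y.
Proof.
  apply/matrixP => i j. rewrite !mxE /mmul Csum_big.
  by apply: eq_bigr => k _; rewrite !mxE.
Qed.

Lemma toM_add n X Y : toM n (madd X Y) = toM n X + toM n Y.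
Proof. by apply/matrixP => i j; rewrite !mxE. Qed.

Definition cR (r : R) : C := mkC r 0.

Lemma Cscal_cR r x : Cscal r x = cR r * x.
Proof. apply: C_ext; rewrite /= ?re_mul ?im_mul /=; ring. Qed.

Lemma toM_scal n r X : toM n (mscal r X) = cR r *: toM n X.
Proof. by apply/matrixP => i j; rewrite !mxE /mscal Cscal_cR. Qed.

Lemma toM_mid n : toM n mid = 1%:M.
Proof.
  apply/matrixP => i j; rewrite !mxE /mid.
  case: (Nat.eqb_spec i j) => [E|E].
  - have -> : i = j by apply: val_inj.
    by rewrite eqxx.
  - have -> : (i == j) = false by apply/negbTE/eqP => H; apply: E; rewrite H.
    by [].
Qed.

Lemma trace_tr n X : trace n X = \tr (toM n X).
Proof. rewrite /trace Csum_big /mxtrace; apply: eq_bigr => i _; by rewrite mxE. Qed.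

Lemma toM_eq n X Y : toM n X = toM n Y ->
  forall i j, lt i n -> lt j n -> X i j = Y i j.
Proof.
  move=> E i j /ltP Hi /ltP Hj.
  have := congr1 (fun M : 'M[C]_n => M (Ordinal Hi) (Ordinal Hj)) E.
  by rewrite !mxE.
Qed.

Definition fromM n (Y : 'M[C]_n) : Mat := fun i j =>
  match (insub i : option 'I_n), (insub j : option 'I_n) with
  | Some i', Some j' => Y i' j'
  | _, _ => C0 end.

Lemma toM_fromM n Y : toM n (@fromM n Y) = Y.
Proof.
  apply/matrixP => i j; rewrite mxE /fromM.
  by rewrite !valK.
Qed.

Close Scope ring_scope.
Open Scope ring_scope.

Lemma Cconj_add x y : Cconj (x + y) = Cconj x + Cconj y.
Proof. apply: C_ext => /=; rewrite ?re_add ?im_add /=; ring. Qed.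
Lemma Cconj_mul x y : Cconj (x * y) = Cconj x * Cconj y.
Proof. apply: C_ext => /=; rewrite ?re_mul ?im_mul /=; ring. Qed.
Lemma Cconj0 : Cconj 0 = 0.
Proof. apply: C_ext => /=; rewrite ?re_0 ?im_0; ring. Qed.
Lemma Cconj1 : Cconj 1 = 1.
Proof. apply: C_ext => /=; rewrite ?re_1 ?im_1; ring. Qed.
Lemma CconjK x : Cconj (Cconj x) = x.
Proof. apply: C_ext => /=; ring. Qed.
Lemma Cconj_sum n (F : 'I_n -> C) : Cconj (\sum_(i < n) F i) = \sum_(i < n) Cconj (F i).
Proof. exact: (big_morph Cconj Cconj_add Cconj0). Qed.

Definition adj m p (X : 'M[C]_(m, p)) : 'M[C]_(p, m) := \matrix_(i, j) Cconj (X j i).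

Lemma adj_mul m p q (X : 'M[C]_(m, p)) (Y : 'M[C]_(p, q)) : adj (X *m Y) = adj Y *m adj X.
Proof.
  apply/matrixP => i j; rewrite !mxE Cconj_sum; apply: eq_bigr => k _.
  by rewrite !mxE Cconj_mul mulrC.
Qed.
Lemma adj_add m p (X Y : 'M[C]_(m, p)) : adj (X + Y) = adj X + adj Y.
Proof. by apply/matrixP => i j; rewrite !mxE Cconj_add. Qed.
Lemma adj_scale m p c (X : 'M[C]_(m, p)) : adj (c *: X) = Cconj c *: adj X.
Proof. by apply/matrixP => i j; rewrite !mxE Cconj_mul. Qed.
Lemma adjK m p (X : 'M[C]_(m, p)) : adj (adj X) = X.
Proof. by apply/matrixP => i j; rewrite !mxE CconjK. Qed.
Lemma adj1 n : adj (1%:M : 'M[C]_n) = 1%:M.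
Proof.
  apply/matrixP => i j; rewrite !mxE eq_sym.
  by case: (i == j); rewrite /= ?Cconj1 ?Cconj0.
Qed.
Lemma tr_adj n (X : 'M[C]_n) : \tr (adj X) = Cconj (\tr X).
Proof. rewrite /mxtrace Cconj_sum; apply: eq_bigr => i _; by rewrite mxE. Qed.

Definition qf n (N : 'M[C]_n) (x : 'cV[C]_n) : C := (adj x *m N *m x) 0 0.

Lemma qf_sum n (N : 'M[C]_n) x :
  qf N x = \sum_(i < n) \sum_(j < n) Cconj (x i 0) * (N i j * x j 0).
Proof.
  rewrite /qf mxE. rewrite exchange_big /=. apply: eq_bigr => j _.
  rewrite mxE mulr_suml. apply: eq_bigr => i _. by rewrite !mxE mulrA.
Qed.

Lemma PSD_qf n N : PSD n N -> forall x : 'cV[C]_n,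
  im (qf (toM n N) x) = 0%R /\ (0 <= re (qf (toM n N) x))%R.
Proof.
  move=> H x.
  pose u := fun k => match (insub k : option 'I_n) with Some k' => x k' 0 | None => C0 end.
  have := H u. suff -> : qform n N u = qf (toM n N) x by [].
  rewrite qf_sum /qform Csum_big. apply: eq_bigr => i _.
  rewrite Csum_big. apply: eq_bigr => j _.
  by rewrite /u !valK mxE.
Qed.

Close Scope ring_scope.
Open Scope ring_scope.

Lemma nsq_sum n (x : 'cV[C]_n) : (adj x *m x) ord0 ord0 = \sum_(i < n) Cconj (x i ord0) * x i ord0.
Proof. rewrite mxE; apply: eq_bigr => i _; by rewrite mxE. Qed.

Lemma nsq_nonneg n (x : 'cV[C]_n) : (0 <= re ((adj x *m x) ord0 ord0))%R /\ im ((adj x *m x) ord0 ord0) = 0%R.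
Proof.
  rewrite nsq_sum. apply: (big_ind (fun z => (0 <= re z)%R /\ im z = 0%R)).
  - rewrite re_0 im_0; split; lra.
  - move=> a b [H1 H2] [H3 H4]; rewrite re_add im_add; split; lra.
  - move=> i _; rewrite re_mul im_mul; cbn [re im Cconj]; split; nra.
Qed.

Lemma nsq_pos n (x : 'cV[C]_n) : x != 0 -> (0 < re ((adj x *m x) ord0 ord0))%R.
Proof.
  move=> nz. have [k Hk] : exists k, x k ord0 != 0.
  { apply/existsP. apply: contraNT nz => /existsPn H. apply/eqP/matrixP => i j.
    rewrite (ord1 j) mxE. by apply/eqP; have := H i; rewrite negbK. }
  rewrite nsq_sum (bigD1 k) // re_add.
  match goal with |- (0 < _ + re ?S)%R => have [H1 _] : (0 <= re S)%R /\ im S = 0%R end.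
  { apply: (big_ind (fun z => (0 <= re z)%R /\ im z = 0%R)).
    - rewrite re_0 im_0; split; lra.
    - move=> a b [H1 H2] [H3 H4]; rewrite re_add im_add; split; lra.
    - move=> i _; rewrite re_mul im_mul; cbn [re im Cconj]; split; nra. }
  have H2 : (0 < re ((Cconj (x k ord0) * x k ord0)%ring))%R.
  { rewrite re_mul /=. have : x k ord0 <> C0 by apply/eqP.
    case: (x k ord0) => a b /= Hne.
    have : a <> 0%R \/ b <> 0%R.
    { case: (Req_dec a 0) => Ha; case: (Req_dec b 0) => Hb; auto.
      exfalso; apply: Hne; by rewrite Ha Hb. }
    case=> H; [have := Rsqr_pos_lt a H | have := Rsqr_pos_lt b H]; rewrite /Rsqr; nra. }
  lra.
Qed.

Lemma qf_add n (X Y : 'M[C]_n) x : qf (X + Y) x = qf X x + qf Y x.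
Proof. by rewrite /qf mulmxDr mulmxDl mxE. Qed.
Lemma qf_scale n c (X : 'M[C]_n) x : qf (c *: X) x = c * qf X x.
Proof. by rewrite /qf -scalemxAr -scalemxAl mxE. Qed.
Lemma qf_one n (x : 'cV[C]_n) : qf 1%:M x = (adj x *m x) ord0 ord0.
Proof. by rewrite /qf mulmx1. Qed.

Lemma PSD_add n A B : PSD n A -> PSD n B -> PSD n (madd A B).
Proof.
  move=> HA HB u; have [a1 a2] := HA u; have [b1 b2] := HB u.
  have E : qform n (madd A B) u = Cadd (qform n A u) (qform n B u).
  { rewrite /qform /madd Csum_add; congr Csum; apply: functional_extensionality => i.
    rewrite Csum_add; congr Csum; apply: functional_extensionality => j.
    apply: C_ext => /=; ring. }
  rewrite E /=; split; lra.
Qed.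

Lemma shift_unit n M s : PSD n M -> (0 < s)%R -> toM n (madd M (mscal s mid)) \in unitmx.
Proof.
  move=> HM Hs. rewrite toM_add toM_scal toM_mid unitmxE unitfE.
  apply/negP => /det0P [v nz vN].
  pose x := adj v.
  have xnz : x != 0.
  { apply: contraNneq nz => H. apply/eqP. rewrite -(adjK v) -/x H; apply/matrixP => i j; by rewrite !mxE Cconj0. }
  have Q : qf (toM n M + cR s *: 1%:M) x = 0.
  { by rewrite /qf /x adjK vN mul0mx mxE. }
  rewrite qf_add qf_scale qf_one in Q.
  have [_ H1] := PSD_qf HM x.
  have H2 := nsq_pos xnz.
  have := congr1 re Q. rewrite re_add re_mul.
  have [_ H3] := nsq_nonneg x. rewrite H3 re_0. cbn [re im cR]. nra.
Qed.

Close Scope ring_scope.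
Open Scope ring_scope.

Definition sesq n (X : 'M[C]_n) (x y : 'cV[C]_n) : C := (adj x *m X *m y) ord0 ord0.

Lemma qf_expand n (X : 'M[C]_n) x y c :
  qf X (x + c *: y) = qf X x + Cconj c * c * qf X y + c * sesq X x y + Cconj c * sesq X y x.
Proof.
  rewrite /qf /sesq adj_add adj_scale !mulmxDl !mulmxDr -!scalemxAl -!scalemxAr.
  move: (adj x *m X *m x) (adj y *m X *m y) (adj x *m X *m y) (adj y *m X *m x) => p q r t.
  rewrite !mxE. move: (p _ _) (q _ _) (r _ _) (t _ _) => P Q Rr T.
  apply: C_ext; do 4 rewrite ?re_add ?im_add ?re_mul ?im_mul; cbn [re im Cconj]; ring.
Qed.

Lemma conj_nat (b : bool) : Cconj (b%:R) = b%:R.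
Proof. case: b => /=; [exact: Cconj1|exact: Cconj0]. Qed.

Lemma sesq_ev n (X : 'M[C]_n) a b : sesq X (delta_mx a 0) (delta_mx b 0) = X a b.
Proof.
  rewrite /sesq.
  have -> : adj (delta_mx a 0 : 'cV[C]_n) = delta_mx 0 a.
  { apply/matrixP => i j; rewrite !mxE conj_nat. by rewrite andbC. }
  by rewrite -rowE -colE !mxE.
Qed.

Lemma qf_ev n (X : 'M[C]_n) a : qf X (delta_mx a 0) = X a a.
Proof. exact: sesq_ev. Qed.

Lemma PSD_herm n N : PSD n N -> adj (toM n N) = toM n N.
Proof.
  move=> H. set X := toM n N.
  have Hq := PSD_qf H. rewrite -/X in Hq.
  have Haa : forall a, im (X a a) = 0%R.
  { move=> a. have [h _] := Hq (delta_mx a 0). by rewrite qf_ev in h. }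
  apply/matrixP => a b. rewrite mxE.
  case: (eqVneq a b) => [<-|Hab].
  - apply: C_ext => /=; [done|]. rewrite Haa. lra.
  - have [h1 _] := Hq (delta_mx a 0 + 1 *: delta_mx b 0).
    have [h2 _] := Hq (delta_mx a 0 + (mkC 0 1) *: delta_mx b 0).
    rewrite qf_expand !sesq_ev !qf_ev in h1.
    rewrite qf_expand !sesq_ev !qf_ev in h2.
    move: h1 h2. rewrite !im_add !im_mul !re_mul /=.
    have := Haa a. have := Haa b. move=> E1 E2.
    rewrite E1 E2 => h1 h2.
    apply: C_ext => /=; lra.
Qed.

Close Scope ring_scope.
Open Scope ring_scope.

Lemma toM_ext n X Y : (forall i j, lt i n -> lt j n -> X i j = Y i j) -> toM n X = toM n Y.
Proof. move=> H; apply/matrixP => i j; rewrite !mxE; apply: H; apply/ltP; exact: ltn_ord. Qed.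

Lemma toM_zero n : toM n (fun _ _ => C0) = 0.
Proof. by apply/matrixP => i j; rewrite !mxE. Qed.

Lemma Cconj_cR r : Cconj (cR r) = cR r.
Proof. apply: C_ext => /=; ring. Qed.

Lemma cR_sub r1 r2 : cR r1 - cR r2 = cR (r1 - r2)%R.
Proof. apply: C_ext; rewrite ?re_add ?im_add ?re_opp ?im_opp /=; ring. Qed.

Lemma resolv_spec n M s : PSD n M -> (0 < s)%R ->
  toM n (resolv n M s) *m (toM n M + cR s *: 1%:M) = 1%:M /\
  (toM n M + cR s *: 1%:M) *m toM n (resolv n M s) = 1%:M.
Proof.
  move=> HM Hs.
  have U := shift_unit HM Hs.
  set N := madd M (mscal s mid).
  have EN : toM n N = toM n M + cR s *: 1%:M by rewrite toM_add toM_scal toM_mid.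
  have P : exists X, forall i j, lt i n -> lt j n ->
       mmul n X N i j = mid i j /\ mmul n N X i j = mid i j.
  { exists (fromM (invmx (toM n N))). move=> i j Hi Hj; split.
    - apply: toM_eq Hi Hj. by rewrite toM_mul toM_fromM toM_mid mulVmx.
    - apply: toM_eq Hi Hj. by rewrite toM_mul toM_fromM toM_mid mulmxV. }
  have Q := @epsilon_spec Mat (inhabits mid) _ P.
  rewrite -EN /resolv -/N; split.
  - rewrite -toM_mul -(toM_mid n). apply: toM_ext => i j Hi Hj. by case: (Q i j Hi Hj).
  - rewrite -toM_mul -(toM_mid n). apply: toM_ext => i j Hi Hj. by case: (Q i j Hi Hj).
Qed.

Lemma resolv_herm n M s : PSD n M -> (0 < s)%R ->
  adj (toM n (resolv n M s)) = toM n (resolv n M s).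
Proof.
  move=> HM Hs. have [H1 H2] := resolv_spec HM Hs.
  move: H1 H2. set Rr := toM n (resolv n M s). set N := toM n M + cR s *: 1%:M. move=> H1 H2.
  have HN : adj N = N by rewrite /N adj_add adj_scale adj1 Cconj_cR PSD_herm.
  have H3 : N *m adj Rr = 1%:M by rewrite -HN -adj_mul H1 adj1.
  by rewrite -{2}[Rr]mulmx1 -H3 mulmxA H1 mul1mx.
Qed.

Lemma nsq_ge n (x : 'cV[C]_n) k :
  (re (x k ord0) * re (x k ord0) + im (x k ord0) * im (x k ord0) <= re ((adj x *m x) ord0 ord0))%R.
Proof.
  rewrite nsq_sum (bigD1 k) // re_add.
  match goal with |- (_ <= _ + re ?S)%R => have [H1 _] : (0 <= re S)%R /\ im S = 0%R end.
  { apply: (big_ind (fun z => (0 <= re z)%R /\ im z = 0%R)).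
    - rewrite re_0 im_0; split; lra.
    - move=> a b [H1 H2] [H3 H4]; rewrite re_add im_add; split; lra.
    - move=> i _; rewrite re_mul im_mul; cbn [re im Cconj]; split; nra. }
  rewrite re_mul; cbn [re im Cconj]. lra.
Qed.

Lemma sq_abs_bound y t : (0 < t)%R -> (y * y <= / t * / t)%R -> (Rabs y <= / t)%R.
Proof.
  move=> Ht H. have Hi : (0 < / t)%R by apply: Rinv_0_lt_compat.
  rewrite -(Rabs_right (/ t)); last lra.
  apply: Rsqr_le_abs_0. rewrite /Rsqr. lra.
Qed.

Lemma resolv_bound n M t : PSD n M -> (0 < t)%R -> EB n (resolv n M t) (/ t).
Proof.
  move=> HM Ht i j /ltP Hi /ltP Hj.
  have [H1 H2] := resolv_spec HM Ht.
  move: H1 H2. set Rr := toM n (resolv n M t). set N := toM n M + cR t *: 1%:M. move=> H1 H2.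
  pose I := Ordinal Hi. pose J := Ordinal Hj.
  pose x := col J Rr.
  have Nx : N *m x = delta_mx J 0 by rewrite /x colE mulmxA H2 mul1mx.
  have Q : qf N x = Cconj (x J ord0).
  { rewrite /qf -mulmxA Nx mxE (bigD1 J) //= big1 => [|k Hk].
    - by rewrite !mxE !eqxx mulr1 addr0.
    - by rewrite !mxE (negbTE Hk) mulr0. }
  rewrite /N qf_add qf_scale qf_one in Q.
  have [_ P1] := PSD_qf HM x.
  have [P2 P3] := nsq_nonneg x.
  set S := re ((adj x *m x) ord0 ord0) in P2 P3.
  have := congr1 re Q. rewrite re_add re_mul P3; cbn [re im cR Cconj] => Q1.
  have Bj := nsq_ge x J. have Bi := nsq_ge x I. rewrite -/S in Bj Bi Q1.
  have HS : (S <= / t * / t)%R.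
  { have E1 : (t * S <= re (x J ord0))%R by nra.
    have E0 : (0 <= t * S)%R by apply: Rmult_le_pos; lra.
    have E2 : (t * S * (t * S) <= S)%R.
    { have := Rmult_le_compat _ _ _ _ E0 E0 E1 E1. nra. }
    case: (Req_dec S 0) => [->|HS0]; first by nra.
    have Spos : (0 < S)%R by lra.
    have E3 : (t * t * S <= 1)%R.
    { apply: (Rmult_le_reg_r S); [lra|]. nra. }
    have Htt : (0 < t * t)%R by nra.
    apply: (Rmult_le_reg_l (t * t)); [lra|].
    have -> : (t * t * (/ t * / t) = 1)%R by field; lra.
    lra. }
  have Ex : x I ord0 = resolv n M t i j by rewrite /x !mxE.
  rewrite -Ex. split; apply: sq_abs_bound => //; nra.
Qed.

Close Scope ring_scope.
Open Scope ring_scope.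

Lemma key_identity n (X A Rr : 'M[C]_n) c :
  X *m Rr = 1%:M - c *: Rr ->
  \tr (X *m (cR 2 *: (Rr *m A *m Rr *m A *m Rr))) =
  \tr (A *m (Rr *m A *m Rr)) + \tr (A *m (Rr *m A *m Rr)) +
  c * \tr (0 *m (Rr *m A *m Rr) + A *m (((cR (-1)) *: (Rr *m Rr) *m A + Rr *m 0) *m Rr
            + Rr *m A *m (cR (-1) *: (Rr *m Rr)))).
Proof.
  move=> HX.
  rewrite mul0mx mulmx0 add0r addr0 -?scalemxAr -?scalemxAl -?scalemxAr.
  rewrite !mulmxA HX.
  rewrite ?mulmxBl ?mul1mx -?scalemxAl.
  rewrite mulmxDr -?scalemxAr !mulmxA.
  rewrite -scaleN1r.
  rewrite ?mxtraceZ ?mxtraceD ?mxtraceZ ?mxtraceD ?mxtraceZ.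
  have T1 : \tr (A *m Rr *m Rr *m A *m Rr) = \tr (Rr *m A *m Rr *m A *m Rr).
  { have := mxtrace_mulC (A *m Rr) (Rr *m A *m Rr). by rewrite !mulmxA. }
  have T2 : \tr (A *m Rr *m A *m Rr *m Rr) = \tr (Rr *m A *m Rr *m A *m Rr).
  { have := mxtrace_mulC (A *m Rr *m A *m Rr) Rr. by rewrite !mulmxA. }
  rewrite T1 T2.
  move: (\tr (Rr *m A *m Rr *m A *m Rr)) (\tr (A *m Rr *m A *m Rr)) => u v.
  apply: C_ext; do 4 rewrite ?re_add ?im_add ?re_mul ?im_mul ?re_opp ?im_opp ?re_1 ?im_1; cbn [re im cR]; ring.
Qed.

Close Scope ring_scope.
Open Scope ring_scope.

Lemma tr_real n (A Rr : 'M[C]_n) : adj A = A -> adj Rr = Rr ->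
  im (\tr (A *m (Rr *m A *m Rr))) = 0%R.
Proof.
  move=> HA HR.
  have E : Cconj (\tr (A *m (Rr *m A *m Rr))) = \tr (A *m (Rr *m A *m Rr)).
  { rewrite -tr_adj !adj_mul HA HR.
    have := mxtrace_mulC Rr (A *m Rr *m A). by rewrite !mulmxA. }
  have := congr1 im E. cbn [im Cconj]. lra.
Qed.

Close Scope ring_scope.

Lemma comp_eq (phi p phid : R -> R) l1 l2 :
  improper_int phi l1 -> improper_int p l2 ->
  (forall x, 0 < x -> derivable_pt_lim phi x (phid x)) ->
  (forall x, 0 < x -> continuity_pt p x) ->
  (forall x, 0 < x -> p x = 2 * phi x + x * phid x) -> l2 = l1.
Proof.
  intros H1 H2 Hd Hc Hid. apply (main_an H1 H2).
  intros a b Ha Hab pr.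
  apply (@FTC_local (fun x => p x + -1 * phi x) (fun x => x * phi x) a b Hab).
  - intros x Hx.
    have Hphi : continuity_pt phi x.
    { apply derivable_continuous_pt. exists (phid x). apply Hd; lra. }
    have := continuity_pt_plus p (mult_real_fct (-1) phi) x (Hc x ltac:(lra))
              (continuity_pt_scal phi (-1) x Hphi).
    by unfold plus_fct, mult_real_fct.
  - intros x Hx.
    have := derivable_pt_lim_mult id phi x 1 (phid x) (derivable_pt_lim_id x) (Hd x ltac:(lra)).
    move=> X. eapply dpl_eq; [exact X|].
    rewrite Hid; [ring|lra].
Qed.

Definition ZM : Mat := fun _ _ => C0.
Definition DR n M x : Mat := mscal (-1) (mmul n (resolv n M x) (resolv n M x)).
Definition E1 n A M x : Mat := madd (mmul n (DR n M x) A) (mmul n (resolv n M x) ZM).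
Definition E2 n A M x : Mat :=
  madd (mmul n (E1 n A M x) (resolv n M x)) (mmul n (mmul n (resolv n M x) A) (DR n M x)).
Definition E3 n A M x : Mat :=
  madd (mmul n ZM (mmul n (mmul n (resolv n M x) A) (resolv n M x))) (mmul n A (E2 n A M x)).

Open Scope ring_scope.
Lemma resolv_id n M s t : PSD n M -> (0 < s)%R -> (0 < t)%R ->
  toM n (resolv n M t) = toM n (resolv n M s) +
     cR (s - t) *: (toM n (resolv n M t) *m toM n (resolv n M s)).
Proof.
  move=> HM Hs Ht.
  have [S1 S2] := resolv_spec HM Hs. have [T1 T2] := resolv_spec HM Ht.
  have EN : toM n M + cR s *: 1%:M = (toM n M + cR t *: 1%:M) + cR (s - t) *: 1%:M.
  { rewrite -addrA -scalerDl. congr (_ + _ *: _). apply: C_ext; rewrite ?re_add ?im_add /=; ring. }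
  rewrite -{1}[toM n (resolv n M t)]mulmx1 -S2 mulmxA EN mulmxDr T1 -scalemxAr mulmx1 mulmxDl mul1mx -scalemxAl.
  done.
Qed.
Close Scope ring_scope.

Lemma MD_R n M s : PSD n M -> 0 < s -> MD n (resolv n M) (DR n M s) s.
Proof.
  move=> HM Hs. unfold DR. refine (@R_deriv (resolv n M) n s Hs _ _ _).
  - move=> t Ht. exact: resolv_bound.
  - move=> t Ht i j Hi Hj.
    change (resolv n M t i j = madd (resolv n M s) (mscal (s - t) (mmul n (resolv n M t) (resolv n M s))) i j).
    apply: (toM_eq _ Hi Hj).
    rewrite toM_add toM_scal toM_mul. exact: resolv_id.
  - move=> t Ht i j Hi Hj.
    change (mmul n (resolv n M t) (resolv n M s) i j = madd (mmul n (resolv n M s) (resolv n M s))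
       (mscal (s - t) (mmul n (mmul n (resolv n M t) (resolv n M s)) (resolv n M s))) i j).
    apply: (toM_eq _ Hi Hj).
    rewrite toM_add toM_scal !toM_mul.
    rewrite {1}(resolv_id HM Hs Ht) mulmxDl -scalemxAl. done.
Qed.
Theorem lemma4 (n : nat) (A B : Mat) (hA : PSD n A) (hB : PSD n B)
  (T Rm : Mat)
  (hT : is_opT n (madd A B) A T)
  (hR : is_opR n (madd A B) A Rm) :
  im (trace n (mmul n (madd A B) Rm)) = 0 /\
  im (trace n (mmul n A T)) = 0 /\
  re (trace n (mmul n A T)) <= re (trace n (mmul n (madd A B) Rm)).
Proof.
  have HM : PSD n (madd A B) := PSD_add hA hB.
  have C1 := @imp_trace n _ T A hT.
  have C2 := @imp_trace n _ Rm (madd A B) hR.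
  have D1 : forall x, 0 < x ->
     CD (fun t => trace n (mmul n A (mmul n (mmul n (resolv n (madd A B) t) A) (resolv n (madd A B) t))))
        (trace n (E3 n A (madd A B) x)) x.
  { move=> x Hx. apply: CD_trace. rewrite /E3 /E2 /E1 /ZM.
    apply: MD_mul; [apply: MD_const|].
    apply: MD_mul; [apply: MD_mul; [exact: MD_R|apply: MD_const]|exact: MD_R]. }
  have D2 : forall x, 0 < x -> exists d,
     CD (fun t => trace n (mmul n (madd A B) (mscal 2 (mmul n (mmul n (mmul n (mmul n
            (resolv n (madd A B) t) A) (resolv n (madd A B) t)) A) (resolv n (madd A B) t))))) d x.
  { move=> x Hx. eexists. apply: CD_trace.
    apply: MD_mul; [apply: MD_const|]. apply: MD_scal.
    apply: MD_mul; [|exact: MD_R].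
    apply: MD_mul; [|apply: MD_const].
    apply: MD_mul; [|exact: MD_R].
    apply: MD_mul; [exact: MD_R|apply: MD_const]. }
  have ID : forall x, 0 < x ->
     trace n (mmul n (madd A B) (mscal 2 (mmul n (mmul n (mmul n (mmul n
            (resolv n (madd A B) x) A) (resolv n (madd A B) x)) A) (resolv n (madd A B) x)))) =
     Cadd (Cadd (trace n (mmul n A (mmul n (mmul n (resolv n (madd A B) x) A) (resolv n (madd A B) x))))
                (trace n (mmul n A (mmul n (mmul n (resolv n (madd A B) x) A) (resolv n (madd A B) x)))))
          (Cmul (cR x) (trace n (E3 n A (madd A B) x))).
  { move=> x Hx. rewrite !trace_tr /E3 /E2 /E1 /DR /ZM.
    do 6 rewrite ?toM_add ?toM_mul ?toM_scal ?toM_zero.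
    have [_ S2] := resolv_spec HM Hx.
    apply: key_identity.
    rewrite toM_add in S2. by rewrite -S2 !mulmxDl -scalemxAl mul1mx GRing.addrK. }
  have IM : forall x, 0 < x ->
     im (trace n (mmul n A (mmul n (mmul n (resolv n (madd A B) x) A) (resolv n (madd A B) x)))) = 0.
  { move=> x Hx. rewrite trace_tr !toM_mul.
    apply: tr_real; [exact: PSD_herm|exact: resolv_herm]. }
  destruct C1 as [C1r C1i]. destruct C2 as [C2r C2i].
  have Er : re (trace n (mmul n (madd A B) Rm)) = re (trace n (mmul n A T)).
  { apply: (comp_eq C1r C2r (phid := fun x => re (trace n (E3 n A (madd A B) x)))).
    - move=> x Hx. exact: (proj1 (D1 x Hx)).
    - move=> x Hx. have [d Hd] := D2 x Hx. exact: (proj1 (CD_cont Hd)).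
    - move=> x Hx. rewrite (ID x Hx) /=. ring. }
  have Ei : im (trace n (mmul n (madd A B) Rm)) = im (trace n (mmul n A T)).
  { apply: (comp_eq C1i C2i (phid := fun x => im (trace n (E3 n A (madd A B) x)))).
    - move=> x Hx. exact: (proj2 (D1 x Hx)).
    - move=> x Hx. have [d Hd] := D2 x Hx. exact: (proj2 (CD_cont Hd)).
    - move=> x Hx. rewrite (ID x Hx) /=. ring. }
  have Z : im (trace n (mmul n A T)) = 0.
  { apply: (imp_zero C1i). exact: IM. }
  split; [lra|split; [exact Z|lra]].
Qed.
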